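(* For all integers $n,f,k$ with $1\le f\le n-1$ and $1\le k\le n$, the task $k\text{-TAg}(n+1,f)$ is $C^*$-reducible to $k\text{-TAg}(n,f)$. (The algorithm of the preceding $C^*$-reduction, with $\Pi=\{1,\dots,n+1\}$, $\Pi_i=\Pi\setminus\{i\}$, in which each process $i$ queries the oracles $\mathcal O.k\text{-TAg}(\Pi_l,f)$, $l\ne i$, in order with its initial value and broadcasts each answer, but finally decides $\min_l w_l$ instead of $\max_l w_l$, solves $k\text{-TAg}(\Pi,f)$.)
   Context: Model: a finite set of processes runs an asynchronous algorithm communicating by reliable message passing with unbounded delays and speeds; processes fail only by crashing. Time is $\mathcal T=\mathbb N$; a failure pattern $F$ for $\Pi$ is a nondecreasing map $\mathcal T\to2^\Pi$, $Faulty(F)=\bigcup_tF(t)$. A binary agreement problem $P$ for $\Pi$ maps each $(F,\vec V)$, $\vec V\in\{0,1\}^\Pi$, to a nonempty $P(F,\vec V)\subseteq\{0,1\}$; a task is $T=(P,f)$. An algorithm solves $T$ if in every run with $|Faulty(F)|\le f$ and initial values $\vec V$: every correct process eventually decides, decisions are irrevocable, no two processes decide differently, and decisions lie in $P(F,\vec V)$. $k\text{-TAg}_\Pi(F,\vec V)=\{0\}$ if at least $k$ entries of $\vec V$ are $0$; $=\{1\}$ if $\vec V$ is all-ones and $|Faulty(F)|\le k-1$; $=\{0,1\}$ otherwise; $k\text{-TAg}(\Pi,f)=(k\text{-TAg}_\Pi,f)$; $k\text{-TAg}(n,f)=k\text{-TAg}(\{1,\dots,n\},f)$. Oracles: for $T=(P,f)$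 on process set $\Pi'$, $\mathcal O.T$ is a black box with consultants $\Pi'$; its history is a sequence of successive consultations, in each of which every consultant may submit at most one query in $\{0,1\}$ and the oracle returns a common response $d$ with $d\in P(F,\vec V)$ for every $\vec V$ extending the partial query vector (the oracle may use the whole failure pattern, including future crashes), and every correct querier gets the response whenever at least $|\Pi'|-f$ consultants query; $\mathcal O.T$ is the most general such oracle. $C^*$-reduction: $T_1\le_{C^*}T_2$ if there is an algorithm solving $T_1$ whose processes may additionally consult any finite collection of oracles $\mathcal O.T_2^{(j)}$, each $T_2^{(j)}$ being a copy of $T_2$ whose processes are renamed into (a subset of) the processes of $T_1$. *)

(* Defs.v *)
From mathcomp Require Import all_boot.
From mathcomp Require Import boolp.

Set Implicit Arguments.
Unset Strict Implicit.
Unset Printing Implicit Defensive.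

(* Process set Pi = 'I_N (processes 0..N-1 play the role of 1..N).
   Time = nat.  A failure pattern maps each time to the set of processes
   crashed by that time. *)
Definition fpattern (N : nat) := nat -> {set 'I_N}.

Definition is_fpattern N (F : fpattern N) : Prop :=
  forall t t', t <= t' -> F t \subset F t'.

Definition Faulty N (F : fpattern N) : {set 'I_N} :=
  [set p | `[< exists t, p \in F t >]].

Definition correct N (F : fpattern N) (p : 'I_N) : Prop :=
  forall t, p \notin F t.

(* A binary agreement problem: (F, V) |-> subset of {0,1}
   (false = 0, true = 1). *)
Definition problem (N : nat) := fpattern N -> ('I_N -> bool) -> {set bool}.

Definition task (N : nat) := (problem N * nat)%type.

Definition kTAg (N k : nat) : problem N := fun F V =>
  if k <= #|[set p | ~~ V p]| then [set false]
  else if [forall p, V p] && (#|Faulty F| <= k.-1) then [set true]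
  else [set: bool].

Definition kTAg_task (N k f : nat) : task N := (@kTAg N k, f).

Inductive input (N m : nat) (M : Type) :=
| InNone
| InMsg of 'I_N & M
| InResp of 'I_m & bool.

Record output (N m : nat) (M : Type) := Output {
  sends : seq ('I_N * M);
  query : option ('I_m * bool) }.

Record algorithm (N m : nat) := Algorithm {
  St : Type;
  Msg : Type;
  init : 'I_N -> bool -> St;
  step : 'I_N -> St -> input N m Msg -> St * output N m Msg;
  decision : St -> option bool }.

Arguments St {N m} a.
Arguments Msg {N m} a.
Arguments init {N m} a.
Arguments step {N m} a.
Arguments decision {N m} a _.

Inductive event (m : nat) :=
| EvNone
| EvMsg of nat & nat        (* deliver the i-th message sent at time t *)
| EvResp of 'I_m & nat.     (* deliver response of consultation c of oracle j *)

Section Exec.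
Variables (N m : nat) (A : algorithm N m).
Variables (V : 'I_N -> bool)
          (sched : nat -> option ('I_N * event m))
          (resp : 'I_m -> nat -> bool).

Definition msg_of (outs : seq (option ('I_N * output N m (Msg A))))
    (t i : nat) (p : 'I_N) : option ('I_N * Msg A) :=
  match nth None outs t with
  | Some (q, o) =>
      match onth (sends o) i with
      | Some (d, msg) => if d == p then Some (q, msg) else None
      | None => None
      end
  | None => None
  end.

Definition input_of (outs : seq (option ('I_N * output N m (Msg A))))
    (p : 'I_N) (ev : event m) : input N m (Msg A) :=
  match ev with
  | EvNone => InNone _ _ _
  | EvMsg t i => match msg_of outs t i p with
                 | Some (q, msg) => InMsg _ q msg
                 | None => InNone _ _ _
                 end
  | EvResp j c => InResp _ _ j (resp j c)
  end.

Fixpoint exec (t : nat) :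
    ('I_N -> St A) * seq (option ('I_N * output N m (Msg A))) :=
  match t with
  | 0 => (fun p => init A p (V p), [::])
  | t'.+1 =>
      let: (st, outs) := exec t' in
      match sched t' with
      | None => (st, rcons outs None)
      | Some (p, ev) =>
          let: (s', o) := step A p (st p) (input_of outs p ev) in
          ((fun q => if q == p then s' else st q), rcons outs (Some (p, o)))
      end
  end.

(* state of p at time t (before the step of time t) *)
Definition state (t : nat) (p : 'I_N) : St A := (exec t).1 p.

Definition outAt (t : nat) : option ('I_N * output N m (Msg A)) :=
  nth None (exec t.+1).2 t.

Definition queries_at (t : nat) (p : 'I_N) (j : 'I_m) (b : bool) : Prop :=
  exists o, outAt t = Some (p, o) /\ query o = Some (j, b).

(* number of queries of p to oracle j strictly before time t *)
Fixpoint nqueries (p : 'I_N) (j : 'I_m) (t : nat) : nat :=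
  match t with
  | 0 => 0
  | t'.+1 => nqueries p j t' +
      (if outAt t' is Some (q, o) then
         (q == p) && (if query o is Some (j', _) then j' == j else false)
       else false)
  end.

(* Process p submits query b in consultation c of oracle j
   (the c-th query of p to j belongs to the c-th consultation). *)
Definition in_consult (j : 'I_m) (c : nat) (p : 'I_N) (b : bool) : Prop :=
  exists t, queries_at t p j b /\ nqueries p j t = c.

End Exec.

(* Admissible runs of A using copies of T2 = (P2, f2) (on 'I_n2) renamed
   by ren j : 'I_n2 -> 'I_N, with failure pattern F and initial values V. *)
Definition admissible (N n2 m : nat) (T2 : task n2)
    (ren : 'I_m -> 'I_n2 -> 'I_N) (A : algorithm N m)
    (F : fpattern N) (V : 'I_N -> bool)
    (sched : nat -> option ('I_N * event m)) (resp : 'I_m -> nat -> bool)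
    : Prop :=
  let P2 := T2.1 in let f2 := T2.2 in
  let Fj := fun j t => [set x | ren j x \in F t] in
  (* V' extends the (final) query vector of consultation c of oracle j *)
  let extends := fun j c (V' : 'I_n2 -> bool) =>
      forall x b, in_consult A V sched resp j c (ren j x) b -> V' x = b in
  let valid := fun j c d =>
      forall V', extends j c V' -> d \in P2 (Fj j) V' in
  [/\
   (forall t p ev, sched t = Some (p, ev) -> p \notin F t) /\
   (forall p, correct F p -> forall t, exists t' ev, t <= t' /\ sched t' = Some (p, ev)),
   (forall t p t0 i, sched t = Some (p, EvMsg m t0 i) ->
      [/\ t0 < t,
          (exists q o msg, outAt A V sched resp t0 = Some (q, o) /\
                           onth (sends o) i = Some (p, msg)) &
          (forall t1, t1 < t -> sched t1 <> Some (p, EvMsg m t0 i))]),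
   (forall t0 q o i p msg, outAt A V sched resp t0 = Some (q, o) ->
      onth (sends o) i = Some (p, msg) -> correct F p ->
      exists t, sched t = Some (p, EvMsg m t0 i)),
   (forall t p j c, sched t = Some (p, EvResp j c) ->
      [/\ exists t0 b, t0 < t /\ queries_at A V sched resp t0 p j b /\
                       nqueries A V sched resp p j t0 = c,
          (forall t1, t1 < t -> sched t1 <> Some (p, EvResp j c)) &
          valid j c (resp j c)]) &
   (forall j c,
      (exists S : {set 'I_n2}, n2 - f2 <= #|S| /\
         forall x, x \in S -> exists b, in_consult A V sched resp j c (ren j x) b) ->
      (exists d, valid j c d) ->
      forall x b, in_consult A V sched resp j c (ren j x) b -> correct F (ren j x) ->
      exists t, sched t = Some (ren j x, EvResp j c))].

Definition solves_with (N n2 m : nat) (T1 : task N) (T2 : task n2)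
    (ren : 'I_m -> 'I_n2 -> 'I_N) (A : algorithm N m) : Prop :=
  forall (F : fpattern N) (V : 'I_N -> bool)
         (sched : nat -> option ('I_N * event m)) (resp : 'I_m -> nat -> bool),
    is_fpattern F -> #|Faulty F| <= T1.2 ->
    admissible T2 ren A F V sched resp ->
    let dec t p := decision A (state A V sched resp t p) in
    [/\
        (forall p, correct F p -> exists t b, dec t p = Some b),
        (forall p t t' b, t <= t' -> dec t p = Some b -> dec t' p = Some b),
        (forall p q t t' b b', dec t p = Some b -> dec t' q = Some b' -> b = b') &
        (forall p t b, dec t p = Some b -> b \in T1.1 F V)].

Definition Cstar_reducible (N n2 : nat) (T1 : task N) (T2 : task n2) : Prop :=
  exists (m : nat) (ren : 'I_m -> 'I_n2 -> 'I_N),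
    (forall j, injective (ren j)) /\
    exists A : algorithm N m, solves_with T1 T2 ren A.

(* Main.v *)
Require Import Defs.
From mathcomp Require Import all_boot.
From mathcomp Require Import boolp.
From mathcomp Require Import zify.

Set Implicit Arguments.
Unset Strict Implicit.
Unset Printing Implicit Defensive.

Lemma card_pre_inj (aT rT : finType) (h : aT -> rT) (B : {set rT}) :
  injective h -> #|h @^-1: B| <= #|B|.
Proof. move=> hi; rewrite -(card_imset _ hi); apply: subset_leq_card; by rewrite sub_imset_pre. Qed.

Lemma onth_index (T : eqType) (s : seq T) x : x \in s -> onth s (index x s) = Some x.
Proof. by move=> xs; rewrite onthE (nth_map x) ?index_mem // nth_index. Qed.

Section Alg.
Variable n : nat.
Local Notation N := n.+1.

Record lst := LSt { sval : bool; scnt : nat; sknown : 'I_N -> option bool }.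
Definition LMsg := ('I_N * bool)%type.

Definition upd (kn : 'I_N -> option bool) (j : 'I_N) (d : bool) :=
  fun j' => if kn j' is Some e then Some e else if j' == j then Some d else None.

Definition stepf (p : 'I_N) (s : lst) (inp : input N N LMsg) : lst * output N N LMsg :=
  let kn' := match inp with
             | InResp j d => upd (sknown s) j d
             | InMsg _ (j, d) => upd (sknown s) j d
             | InNone => sknown s end in
  let snd := match inp with
             | InResp j d => [seq (q, (j, d)) | q <- enum 'I_N]
             | _ => [::] end in
  let qu := if scnt s < N then Some (inord (scnt s) : 'I_N, sval s) else None in
  (LSt (sval s) (scnt s).+1 kn', Output snd qu).

Definition decf (s : lst) : option bool :=
  if [forall j, sknown s j != None] then Some [forall j, sknown s j == Some true] else None.

Definition Alg : algorithm N N :=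
  @Algorithm N N lst LMsg (fun _ b => LSt b 0 (fun _ => None)) stepf decf.

Variables (V : 'I_N -> bool) (sched : nat -> option ('I_N * event N))
          (resp : 'I_N -> nat -> bool).

Local Notation exe := (exec Alg V sched resp).
Local Notation stt := (state Alg V sched resp).
Local Notation out := (outAt Alg V sched resp).

Lemma exec_succ t : exe t.+1 =
  match sched t with
  | None => ((exe t).1, rcons (exe t).2 None)
  | Some (p, ev) =>
     let so := stepf p ((exe t).1 p) (@input_of N N Alg resp (exe t).2 p ev) in
     ((fun q => if q == p then so.1 else (exe t).1 q), rcons (exe t).2 (Some (p, so.2)))
  end.
Proof. rewrite /=; case: (exe t) => st outs /=. by case: (sched t) => [[p ev]|]. Qed.

Lemma size_exec t : size (exe t).2 = t.
Proof.
elim: t => [//|t IH]; rewrite exec_succ.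
by case: (sched t) => [[p ev]|] /=; rewrite size_rcons IH.
Qed.

Lemma nth_exec t t0 : t0 < t -> nth None (exe t).2 t0 = out t0.
Proof.
elim: t => [//|t IH]; rewrite ltnS leq_eqVlt => /orP [/eqP ->|lt]; first by [].
rewrite -IH // exec_succ.
by case: (sched t) => [[p ev]|] /=; rewrite nth_rcons size_exec lt.
Qed.

Lemma outE t : out t =
  match sched t with None => None
  | Some (p, ev) => Some (p, (stepf p (stt t p) (@input_of N N Alg resp (exe t).2 p ev)).2) end.
Proof.
rewrite /outAt exec_succ.
by case: (sched t) => [[p ev]|] /=; rewrite nth_rcons size_exec ltnn eqxx.
Qed.

Lemma stateE t q : stt t.+1 q =
  match sched t with None => stt t q
  | Some (p, ev) => if q == p then (stepf p (stt t p) (@input_of N N Alg resp (exe t).2 p ev)).1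
                    else stt t q end.
Proof. by rewrite /state exec_succ; case: (sched t) => [[p ev]|]. Qed.


Lemma sval_const t p : sval (stt t p) = V p.
Proof.
elim: t p => [//|t IH] p; rewrite stateE.
case: (sched t) => [[q ev]|] //; case: ifP => // /eqP ->; by rewrite /= IH.
Qed.

Lemma scnt_step t p : scnt (stt t.+1 p) =
  scnt (stt t p) + (if sched t is Some (q, _) then q == p else false).
Proof.
rewrite stateE; case: (sched t) => [[q ev]|]; last by rewrite addn0.
by rewrite eq_sym; case: eqP => [->|_] /=; rewrite ?addn1 ?addn0.
Qed.

Lemma scnt_mono t t' p : t <= t' -> scnt (stt t p) <= scnt (stt t' p).
Proof.
move=> /subnK <-; elim: (t' - t) => [//|d IH]; rewrite addSn scnt_step.
exact: leq_trans IH (leq_addr _ _).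
Qed.

Lemma qinv t p (j : 'I_N) :
  nqueries Alg V sched resp p j t = (j < scnt (stt t p)).
Proof.
elim: t => [//|t IH] /=; rewrite IH scnt_step outE.
case: (sched t) => [[q0 ev]|] /=; last by rewrite !addn0.
case: (q0 =P p) => [->|_] /=; last by rewrite !addn0.
case: (ltnP (scnt (stt t p)) N) => [lt|ge].
  rewrite addn1 ltnS (leq_eqVlt j).
  have -> : (inord (scnt (stt t p)) == j) = (scnt (stt t p) == j).
    apply/eqP/eqP => [<-|E]; rewrite ?inordK //; by apply: val_inj; rewrite /= inordK // E.
  by rewrite eq_sym; case: ltngtP => //=.
by rewrite addn0 addn1 !(leq_trans (ltn_ord j)) // ltnW.
Qed.

Lemma query_info t p j b : queries_at Alg V sched resp t p j b ->
  [/\ nqueries Alg V sched resp p j t = 0, b = V p & sched t <> None].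
Proof.
case=> o []; rewrite outE; case: (sched t) => [[q ev]|] //= [<- <-] /=.
case: ltnP => // lt [<- <-]; rewrite qinv sval_const inordK // ltnn; split=> //.
Qed.


Definition GOOD (j : 'I_N) (d : bool) :=
  d = resp j 0 /\ exists t p, sched t = Some (p, EvResp j 0).

Hypothesis Hmsg : forall t p t0 i, sched t = Some (p, EvMsg N t0 i) ->
  t0 < t /\ exists q o msg, out t0 = Some (q, o) /\ onth (sends o) i = Some (p, msg).
Hypothesis Hresp0 : forall t p j c, sched t = Some (p, EvResp j c) ->
  exists t0 b, t0 < t /\ queries_at Alg V sched resp t0 p j b /\
               nqueries Alg V sched resp p j t0 = c.

Definition MsgInv t := forall t0 q o i r (msg : LMsg), t0 < t -> out t0 = Some (q, o) ->
  onth (sends o) i = Some (r, msg) -> GOOD msg.1 msg.2.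
Definition KnInv t := forall p j d, sknown (stt t p) j = Some d -> GOOD j d.

Lemma msg_ofE t t0 i p : t0 < t ->
  @msg_of N N Alg (exe t).2 t0 i p =
  match out t0 with
  | Some (q, o) => match onth (sends o) i with
                   | Some (d, msg) => if d == p then Some (q, msg) else None
                   | None => None end
  | None => None end.
Proof. by move=> lt; rewrite /msg_of nth_exec. Qed.

Lemma input_good t p ev : MsgInv t -> sched t = Some (p, ev) ->
  match @input_of N N Alg resp (exe t).2 p ev with
  | InResp j d => GOOD j d | InMsg _ (j, d) => GOOD j d | InNone => True end.
Proof.
move=> MI E; case: ev E => [|t0 i|j c] E //=.
  have [lt [q [o [msg [Eo Es]]]]] := Hmsg E.
  rewrite msg_ofE // Eo Es eqxx; case: msg Es => j d Es.
  exact: (MI t0 q o i p (j, d)).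
have [t0 [b [lt [Hq Hn]]]] := Hresp0 E.
have [H0 _ _] := query_info Hq; rewrite -Hn H0 in E *.
by split=> //; exists t, p.
Qed.

Lemma inv_all t : MsgInv t /\ KnInv t.
Proof.
elim: t => [|t [MI KI]]; first by split=> // p j d.
split.
  move=> t0 q o i r msg; rewrite ltnS leq_eqVlt => /orP [/eqP ->|lt]; last exact: MI.
  rewrite outE; case E: (sched t) => [[p ev]|] //= [_ <-] /=.
  have G := input_good MI E.
  case: (input_of _ _ _ _) G => [|q1 m1|j d] G /=; rewrite ?onth0n //.
  rewrite onth_map; case: onth => //= q' [_ <-] /=; exact: G.
move=> p j d; rewrite stateE; case E: (sched t) => [[p' ev]|]; last exact: KI.
case: ifP => [/eqP Hp|_]; last exact: KI. subst p.
have G := input_good MI E.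
case: (input_of _ _ _ _) G => [|q [j' d']|j' d'] G /=; first exact: KI.
  rewrite /upd; case Ek: (sknown _ j) => [e|]; first by move=> [<-]; exact: KI Ek.
  by case: eqP => // -> [<-].
rewrite /upd; case Ek: (sknown _ j) => [e|]; first by move=> [<-]; exact: KI Ek.
by case: eqP => // -> [<-].
Qed.


Lemma kn_step t p j e : sknown (stt t p) j = Some e -> sknown (stt t.+1 p) j = Some e.
Proof.
move=> H; rewrite stateE; case: (sched t) => [[p' ev]|] //.
case: ifP => [/eqP Hp|_] //; subst p.
by case: (input_of _ _ _ _) => [|q [j' d']|j' d'] /=; rewrite /upd ?H.
Qed.

Lemma kn_mono t t' p j e : t <= t' ->
  sknown (stt t p) j = Some e -> sknown (stt t' p) j = Some e.
Proof.
move=> /subnK <-; elim: (t' - t) => [//|d IH] H; rewrite addSn; exact/kn_step/IH.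
Qed.

Lemma dec_mono t t' p b : t <= t' -> decf (stt t p) = Some b -> decf (stt t' p) = Some b.
Proof.
move=> le; rewrite /decf; case: ifP => // /forallP H [<-].
have E : forall j, sknown (stt t' p) j = sknown (stt t p) j.
  move=> j; move: (H j); case Ek: (sknown _ j) => [e|] // _; exact: kn_mono Ek.
have -> : [forall j, sknown (stt t' p) j != None].
  by apply/forallP => j; rewrite E.
by congr Some; apply: eq_forallb => j; rewrite E.
Qed.

Lemma dec_val t p b : decf (stt t p) = Some b ->
  b = [forall j, resp j 0] /\ forall j, GOOD j (resp j 0).
Proof.
rewrite /decf; case: ifP => // /forallP H [<-].
have [_ KI] := inv_all t.
have E : forall j, sknown (stt t p) j = Some (resp j 0).
  move=> j; move: (H j); case Ek: (sknown _ j) => [e|] // _.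
  by have [-> _] := KI _ _ _ Ek.
split; first by apply: eq_forallb => j; rewrite E.
move=> j; have := KI _ _ _ (E j); done.
Qed.

Lemma nq_pos p j t : 0 < nqueries Alg V sched resp p j t ->
  exists t0 o b, t0 < t /\ out t0 = Some (p, o) /\ query o = Some (j, b).
Proof.
elim: t => [//|t IH] /=.
case Eo: (out t) => [[q o]|]; last by rewrite addn0 => /IH [t0 [o [b [lt H]]]]; exists t0, o, b; split=> //; exact: ltnW.
case: (q =P p) => [Eq|_] /=; last by rewrite addn0 => /IH [t0 [o' [b [lt H]]]]; exists t0, o', b; split=> //; exact: ltnW.
case Eqo: (query o) => [[j' b]|]; last by rewrite addn0 => /IH [t0 [o' [b [lt H]]]]; exists t0, o', b; split=> //; exact: ltnW.
case: (j' =P j) => [Ej|_]; last by rewrite addn0 => /IH [t0 [o' [b' [lt H]]]]; exists t0, o', b'; split=> //; exact: ltnW.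
by move=> _; exists t, o, b; subst; split.
Qed.


Variable F : fpattern N.
Hypothesis Hcor : forall p, correct F p -> forall t, exists t' ev, t <= t' /\ sched t' = Some (p, ev).

Lemma cnt_grows p c : correct F p -> exists t, c <= scnt (stt t p).
Proof.
move=> Cp; elim: c => [|c [t Ht]]; first by exists 0.
have [t' [ev [le E]]] := Hcor Cp t.
exists t'.+1; rewrite scnt_step E eqxx addn1 ltnS.
exact: leq_trans Ht (scnt_mono p le).
Qed.

Lemma eventually_queries p j : correct F p ->
  in_consult Alg V sched resp j 0 p (V p).
Proof.
move=> Cp; have [t Ht] := cnt_grows j.+1 Cp.
have : 0 < nqueries Alg V sched resp p j t by rewrite qinv Ht.
move=> /nq_pos [t0 [o [b [_ [Eo Eq]]]]].
have Hq : queries_at Alg V sched resp t0 p j b by exists o.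
have [H0 Hb _] := query_info Hq; subst b.
by exists t0.
Qed.

Lemma consult_val j c x b : in_consult Alg V sched resp j c x b -> b = V x /\ c = 0.
Proof. by case=> t0 [/query_info [H0 Hb _] <-]. Qed.


Definition Fj (j : 'I_N) : fpattern n := fun t => [set x | lift j x \in F t].
Definition validd (k : nat) (j : 'I_N) c d := forall V' : 'I_n -> bool,
  (forall x b, in_consult Alg V sched resp j c (lift j x) b -> V' x = b) ->
  d \in @kTAg n k (Fj j) V'.

Lemma notin_faulty (x : 'I_N) : x \notin Faulty F -> correct F x.
Proof.
move=> H t; apply/negP => Ht; move/negP: H; apply; rewrite inE; apply/asboolP; by exists t.
Qed.

Lemma valid_exists k j : 0 < k -> exists d, validd k j 0 d.
Proof.
move=> k0; case: (pselect (validd k j 0 false)) => [H|H]; first by exists false.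
exists true => V2 e2.
have [V1 HV1] : exists V1, ~ ((forall x b, in_consult Alg V sched resp j 0 (lift j x) b -> V1 x = b) -> false \in @kTAg n k (Fj j) V1).
  apply/existsNP => H'; apply: H => V1; exact: H'.
have e1 : forall x b, in_consult Alg V sched resp j 0 (lift j x) b -> V1 x = b.
  by move=> x b Hc; apply: contrapT => Hn; apply: HV1 => Hext; exfalso; apply: Hn; exact: Hext Hc.
have HV1' : false \notin @kTAg n k (Fj j) V1 by apply/negP => Hin; apply: HV1.
rewrite /kTAg in HV1' *.
case: ifP HV1' => [_|nk1]; first by rewrite in_set1.
case: ifP => [/andP [/forallP all1 fk]|_]; last by rewrite in_setT.
move=> _.
case: ifP => [kz|_]; last by case: ifP => _; rewrite ?in_set1 ?in_setT.
exfalso.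
have sub : [set x | ~~ V2 x] \subset Faulty (Fj j).
  apply/subsetP => x; rewrite inE => Hx.
  apply/negPn/negP => Hf.
  have Cx : correct F (lift j x).
    move=> t; apply/negP => Ht; move/negP: Hf; apply; rewrite inE; apply/asboolP.
    by exists t; rewrite inE.
  have Hq := eventually_queries j Cx.
  by move: (e1 _ _ Hq) (e2 _ _ Hq) (all1 x) Hx => -> ->; move=> ->.
have := leq_trans kz (subset_leq_card sub).
move=> /leq_trans /(_ fk); case: (k) k0 => // k' _ /=; by rewrite ltnn.
Qed.


Variables k f : nat.
Hypothesis Hlive : forall j c,
  (exists S : {set 'I_n}, n - f <= #|S| /\
     forall x, x \in S -> exists b, in_consult Alg V sched resp j c (lift j x) b) ->
  (exists d, validd k j c d) ->
  forall x b, in_consult Alg V sched resp j c (lift j x) b -> correct F (lift j x) ->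
  exists t, sched t = Some (lift j x, EvResp j c).
Hypothesis Hrel : forall t0 q o i p msg, out t0 = Some (q, o) ->
  onth (sends o) i = Some (p, msg) -> correct F p ->
  exists t, sched t = Some (p, EvMsg N t0 i).

Lemma eventually_knows p j : correct F p -> #|Faulty F| <= f -> f < n -> 0 < k ->
  exists t, sknown (stt t p) j != None.
Proof.
move=> Cp HF fn k0.
pose S := [set x : 'I_n | `[< correct F (lift j x) >]].
have cS : n - f <= #|S|.
  have sub : ~: S \subset lift j @^-1: Faulty F.
    apply/subsetP => x; rewrite !inE => /asboolPn Hx.
    apply/negPn/negP => H; apply: Hx.
    move=> t; apply/negP => Ht; move/asboolPn: H; apply; by exists t.
  have := leq_trans (subset_leq_card sub) (card_pre_inj (Faulty F) (@lift_inj N j)).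
  have := cardsC S; rewrite card_ord; lia.
have [x xS] : exists x, x \in S.
  by apply/set0Pn; rewrite -card_gt0; apply: leq_trans cS; lia.
have Cx : correct F (lift j x) by move: xS; rewrite inE => /asboolP.
have [t Et] : exists t, sched t = Some (lift j x, EvResp j 0).
  apply: (Hlive (c := 0)) (eventually_queries j Cx) Cx.
    exists S; split=> // y; rewrite inE => /asboolP Cy.
    by exists (V (lift j y)); exact: eventually_queries.
  exact: valid_exists.
set r := lift j x in Et.
have Eo := outE t; rewrite Et /= in Eo.
have [o [{}Eo So]] : exists o, out t = Some (r, o) /\
    sends o = [seq (q, (j, resp j 0)) | q <- enum 'I_N] by eexists; split; [exact: Eo|].
have Es : onth (sends o) (index p (enum 'I_N)) = Some (p, (j, resp j 0)).
  by rewrite So onth_map onth_index ?mem_enum.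
have Cp' := Cp.
have [t' Et'] := Hrel Eo Es Cp.
have [lt _] := Hmsg Et'.
exists t'.+1; rewrite stateE Et' eqxx /= msg_ofE // Eo Es eqxx /= /upd.
by case: (sknown _ j) => // ; rewrite eqxx.
Qed.

End Alg.

Lemma faulty_sub n (F : fpattern n.+1) (j : 'I_n.+1) :
  #|Faulty (fun t => [set x : 'I_n | lift j x \in F t])| <= #|Faulty F|.
Proof.
apply: leq_trans (card_pre_inj (Faulty F) (@lift_inj n.+1 j)).
apply: subset_leq_card; apply/subsetP => x; rewrite !inE => /asboolP [t Ht].
apply/asboolP; exists t; by move: Ht; rewrite inE.
Qed.

Lemma comb n k (F : fpattern n.+1) (V : 'I_n.+1 -> bool) (w : 'I_n.+1 -> bool) :
  0 < k <= n ->
  (forall j, w j \in @kTAg n k (fun t => [set x | lift j x \in F t]) (fun x => V (lift j x))) ->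
  [forall j, w j] \in @kTAg n.+1 k F V.
Proof.
move=> /andP [k0 kn] H; rewrite /kTAg.
case: ifP => [kz|_].
  have [j kj] : exists j : 'I_n.+1, k <= #|[set x : 'I_n | ~~ V (lift j x)]|.
    case: (pickP V) => [l Vl|none].
      exists l; apply: leq_trans kz _.
      rewrite -(card_imset _ (@lift_inj n.+1 l)); apply: subset_leq_card.
      apply/subsetP => p; rewrite inE => Vp.
      have nl : l != p by apply/eqP => E; move: Vp; rewrite -E Vl.
      have [x Ex _] := unlift_some nl; apply/imsetP; exists x; last exact: Ex.
      by rewrite inE -Ex.
    exists (@ord0 n); apply: leq_trans kn _.
    have -> : [set x : 'I_n | ~~ V (lift (@ord0 n) x)] = setT.
      by apply/setP => x; rewrite !inE none.
    by rewrite cardsT card_ord.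
  move: (H j); rewrite /kTAg kj in_set1 => /eqP Wj.
  rewrite in_set1; apply/eqP/negbTE/forallPn; exists j; by rewrite Wj.
case: ifP => [/andP [/forallP all1 fk]|_]; last by rewrite inE.
rewrite in_set1; apply/eqP/forallP => j; move: (H j); rewrite /kTAg.
have -> : [set x : 'I_n | ~~ V (lift j x)] = set0.
  by apply/setP => x; rewrite !inE all1.
rewrite cards0 leqNgt k0 /=.
have -> : [forall p, V (lift j p)] by apply/forallP => x; exact: all1.
by rewrite (leq_trans (faulty_sub F j) fk) in_set1 => /eqP.
Qed.

Theorem mainTheorem8 (n f k : nat) :
  1 <= f <= n - 1 -> 1 <= k <= n ->
  Cstar_reducible (kTAg_task (n + 1) k f) (kTAg_task n k f).
Proof.
move=> Hf Hk; rewrite addn1.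
have fn : f < n by lia.
have k0 : 0 < k by lia.
exists n.+1, (fun j => lift j); split; first by move=> j; exact: lift_inj.
exists (@Alg n) => F V sched resp HFp HF Hadm /=.
case: Hadm => [[Hcr Hcor] Hmsg Hrel Hresp Hlive].
have Hmsg' : forall t p t0 i, sched t = Some (p, EvMsg n.+1 t0 i) ->
  t0 < t /\ exists q o msg, outAt (@Alg n) V sched resp t0 = Some (q, o) /\
                            onth (sends o) i = Some (p, msg).
  by move=> t p t0 i E; have [a b _] := Hmsg _ _ _ _ E.
have Hresp0 : forall t p j c, sched t = Some (p, EvResp j c) ->
  exists t0 b, t0 < t /\ queries_at (@Alg n) V sched resp t0 p j b /\
               nqueries (@Alg n) V sched resp p j t0 = c.
  move=> t p j c E; have [[t0 [b [a [b' c']]]] _ _] := Hresp _ _ _ _ E.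
  by exists t0, b.
split.
- move=> p Cp.
  have H : forall s : seq 'I_n.+1, exists t, forall j, j \in s ->
      sknown (state (@Alg n) V sched resp t p) j != None.
    elim=> [|j s [t IH]]; first by exists 0.
    have [t' Ht'] := eventually_knows Hmsg' Hcor Hlive Hrel j Cp HF fn k0.
    exists (maxn t t') => j'; rewrite inE => /orP [/eqP ->|js].
      move: Ht'; case Ek: (sknown _ j) => [e|] // _.
      by rewrite (kn_mono _ Ek) // leq_maxr.
    move: (IH j' js); case Ek: (sknown _ j') => [e|] // _.
    by rewrite (kn_mono _ Ek) // leq_maxl.
  have [t Ht] := H (enum 'I_n.+1).
  exists t; rewrite /= /decf.
  have -> : [forall j, sknown (state (@Alg n) V sched resp t p) j != None].
    by apply/forallP => j; apply: Ht; rewrite mem_enum.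
  by eexists.
- move=> p t t' b le; exact: dec_mono.
- move=> p q t t' b b' /(dec_val Hmsg' Hresp0) [-> _] /(dec_val Hmsg' Hresp0) [-> _] //.
- move=> p t b /(dec_val Hmsg' Hresp0) [-> G].
  apply: comb; first by rewrite k0 /=; lia.
  move=> j; have [_ [t1 [p1 E1]]] := G j.
  have [_ _ Hv] := Hresp _ _ _ _ E1.
  apply: Hv => x b' Hc; by have [-> _] := consult_val Hc.
Qed.
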